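(* Let $X_1,\ldots,X_n$ be non-empty sets, $\Omega=X_1\times\cdots\times X_n$, and let $F\subset\Omega$ be a full set. If $F$ has finitely many related components, say $F=\bigcup_{i=1}^k R_i$ with $R_1,\ldots,R_k$ the distinct related components of $F$, then $k=1$.
   Context: For $1\le i\le n$, $\Pi_i:\Omega\to X_i$ denotes the canonical projection. A subset $S\subset\Omega$ is good if every complex-valued function $f$ on $S$ can be written as $f(x_1,\ldots,x_n)=u_1(x_1)+\cdots+u_n(x_n)$ for all $(x_1,\ldots,x_n)\in S$, for suitable complex-valued functions $u_i$ on $X_i$. A subset $S\subset\Omega$ is full if $S$ is a maximal good subset of $\Pi_1S\times\cdots\times\Pi_nS$ (i.e. $S$ is good and no good subset of $\Pi_1S\times\cdots\times\Pi_nS$ strictly contains $S$). For a good set $S$, two points $x,y\in S$ are related if there is a finite full subset of $S$ containing both $x$ and $y$; this is an equivalence relation on $S$, and its equivalence classes are the related components of $S$. *)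

(* Defs.v *)
From mathcomp Require Import all_boot all_algebra.
From mathcomp Require Import complex.
From mathcomp Require Import Rstruct.
From Stdlib Require Import List.
Set Implicit Arguments.
Unset Strict Implicit.
Unset Printing Implicit Defensive.
Local Open Scope ring_scope.

Definition CC := complex Rdefinitions.R.

Definition Omega (n : nat) (X : 'I_n -> Type) := forall i : 'I_n, X i.

Definition subset_of {T : Type} (A B : T -> Prop) := forall x, A x -> B x.

Definition proj_set (n : nat) (X : 'I_n -> Type) (S : Omega X -> Prop) (i : 'I_n)
  : X i -> Prop := fun a => exists x, S x /\ x i = a.

Definition box (n : nat) (X : 'I_n -> Type) (S : Omega X -> Prop) : Omega X -> Prop :=
  fun x => forall i, @proj_set n X S i (x i).

(* S is good: every complex function on S is a sum of functions of one
   coordinate (a function on S is represented by any function on Omega,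
   only its values on S matter). *)
Definition good (n : nat) (X : 'I_n -> Type) (S : Omega X -> Prop) : Prop :=
  forall f : Omega X -> CC,
    exists u : forall i : 'I_n, X i -> CC,
      forall x, S x -> f x = \sum_(i < n) u i (x i).

Definition full (n : nat) (X : 'I_n -> Type) (S : Omega X -> Prop) : Prop :=
  good S /\ subset_of S (box S) /\
  forall T : Omega X -> Prop,
    good T -> subset_of S T -> subset_of T (box S) -> subset_of T S.

Definition finite_set {T : Type} (A : T -> Prop) : Prop :=
  exists l : list T, forall x, A x -> In x l.

Definition related (n : nat) (X : 'I_n -> Type) (S : Omega X -> Prop)
  (x y : Omega X) : Prop :=
  exists T : Omega X -> Prop,
    subset_of T S /\ finite_set T /\ full T /\ T x /\ T y.

Definition related_component (n : nat) (X : 'I_n -> Type)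
  (S : Omega X -> Prop) (R : Omega X -> Prop) : Prop :=
  exists x, S x /\ R = (fun y => S y /\ related S x y).

(* Main.v *)
Require Import Defs.
From mathcomp Require Import all_boot all_algebra.
From mathcomp Require Import complex Rstruct ring.
From Stdlib Require Import List Classical ClassicalEpsilon FunctionalExtensionality PropExtensionality.
Set Implicit Arguments.
Unset Strict Implicit.
Unset Printing Implicit Defensive.
Import GRing.Theory.
Local Open Scope ring_scope.

Definition dlt (n : nat) (X : 'I_n -> Type) (x : Omega X) (u : forall i, X i -> CC) : CC :=
  \sum_(i < n) u i (x i).

Definition ker (n : nat) (X : 'I_n -> Type) (S : Omega X -> Prop) (u : forall i, X i -> CC) :=
  forall x, S x -> dlt x u = 0.

Lemma good_ext (n : nat) (X : 'I_n -> Type) (T : Omega X -> Prop) w q :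
  good T -> ker T w -> dlt q w != 0 -> good (fun z => T z \/ z = q).
Proof.
move=> hg hk hq f. have [u hu] := hg f.
pose c := (f q - dlt q u) / dlt q w.
exists (fun i a => u i a + c * w i a).
have E : forall x, \sum_(i<n) (u i (x i) + c * w i (x i)) = dlt x u + c * dlt x w.
  by move=> x; rewrite big_split /= -mulr_sumr.
move=> x [hx|->]; rewrite E.
- by rewrite hk // mulr0 addr0; exact: hu.
- by rewrite /c divfK // addrC subrK.
Qed.

Lemma good_sub (n : nat) (X : 'I_n -> Type) (S T : Omega X -> Prop) :
  good S -> subset_of T S -> good T.
Proof. move=> hg hs f; have [u hu] := hg f; exists u => x hx; exact: hu (hs _ hx). Qed.

Lemma full_ker (n : nat) (X : 'I_n -> Type) (F : Omega X -> Prop) w :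
  full F -> ker F w -> forall p, box F p -> dlt p w = 0.
Proof.
move=> [hg [hsub hmax]] hk p hp. apply: NNPP => hne.
have hne' : dlt p w != 0 by apply/eqP.
have Fp : F p.
  apply: (hmax _ (good_ext hg hk hne')).
  - by move=> z hz; left.
  - by move=> z [hz|->]; [exact: hsub|exact: hp].
  - by right.
by apply: hne; apply: hk.
Qed.

Definition repl (n : nat) (X : 'I_n -> Type) (x : Omega X) (i : 'I_n) (z : Omega X) : Omega X :=
  fun i' => if i' == i then z i' else x i'.

Lemma dlt_repl (n : nat) (X : 'I_n -> Type) (x z : Omega X) i w :
  dlt (repl x i z) w = dlt x w + (w i (z i) - w i (x i)).
Proof.
rewrite /dlt (bigD1 i) //= [in RHS](bigD1 i) //= /repl eqxx.
rewrite (eq_bigr (fun i' => w i' (x i'))); last by move=> i' /negbTE ->.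
ring.
Qed.

Lemma box_repl (n : nat) (X : 'I_n -> Type) (F : Omega X -> Prop) x z i :
  F x -> F z -> box F (repl x i z).
Proof.
move=> hx hz i'; rewrite /repl; case: (i' == i).
- by exists z.
- by exists x.
Qed.

Lemma full_const (n : nat) (X : 'I_n -> Type) (T : Omega X -> Prop) w t0 z i :
  full T -> ker T w -> T t0 -> T z -> w i (z i) = w i (t0 i).
Proof.
move=> hf hk ht hz.
have := full_ker hf hk (box_repl i ht hz).
rewrite dlt_repl (hk _ ht) add0r => /eqP; rewrite subr_eq0 => /eqP //.
Qed.

Lemma good_single (n : nat) (X : 'I_n -> Type) (i0 : 'I_n) (x : Omega X) :
  good (fun z => z = x).
Proof.
move=> f; exists (fun i a => if i == i0 then f x else 0) => z ->.
rewrite (bigD1 i0) //= eqxx big1 ?addr0 // => i /negbTE -> //.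
Qed.

Lemma full_single (n : nat) (X : 'I_n -> Type) (i0 : 'I_n) (x : Omega X) :
  full (fun z => z = x).
Proof.
split; first exact: good_single i0 x.
split; first by move=> z -> i; exists x.
move=> T hg hs hb z hz.
apply: functional_extensionality_dep => i.
by have [x' [-> ->]] := hb z hz i.
Qed.

Lemma related_refl (n : nat) (X : 'I_n -> Type) (i0 : 'I_n) (F : Omega X -> Prop) x :
  F x -> related F x x.
Proof.
move=> hx; exists (fun z => z = x); split; first by move=> z ->.
split; first by exists (x :: nil) => z ->; left.
split; first exact: full_single i0 x.
by [].
Qed.

Lemma greedy (n : nat) (X : 'I_n -> Type) (P T0 : Omega X -> Prop) (l : list (Omega X)) :
  good T0 -> subset_of T0 P ->
  exists T, good T /\ subset_of T0 T /\ subset_of T P /\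
    (forall z, T z -> T0 z \/ In z l) /\
    (forall w, ker T w -> forall q, In q l -> P q -> dlt q w = 0).
Proof.
move=> hg0 hP0; elim: l => [|q l IH] /=.
  exists T0; split; first done; split; first done; split; first done.
  by split; [move=> z hz; left | done].
have [T [hg [h0 [hP [hs hk]]]]] := IH.
case: (classic (P q /\ exists w, ker T w /\ dlt q w != 0)) => [[Pq [w [hw hq]]] | hn].
- exists (fun z => T z \/ z = q). split; first exact: good_ext hg hw hq.
  split; first by move=> z /h0; left.
  split; first by move=> z [/hP|->].
  split.
    move=> z [/hs [?|?]|->]; [left|right;right|right;left]; done.
  move=> w' hw' q' [<-|hq'] Pq'; first by apply: hw'; right.
  by apply: hk => // z hz; apply: hw'; left.
- exists T; split; first done; split; first done; split; first done.
  split.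
    by move=> z /hs [?|?]; [left|right;right].
  move=> w' hw' q' [<-|hq'] Pq'; last exact: hk.
  apply: NNPP => hne; apply: hn; split => //; exists w'; split => //; exact/eqP.
Qed.

Lemma In_enum (A : finType) (a : A) : In a (enum A).
Proof.
have : a \in enum A by rewrite mem_enum.
elim: (enum A) => // b s IH H; simpl; move: H; rewrite seq.in_cons => /orP [/eqP ->|/IH]; auto.
Qed.

Lemma finite_bigU (A : finType) T (P : A -> T -> Prop) :
  (forall a, finite_set (P a)) -> finite_set (fun z => exists a, P a z).
Proof.
move=> h.
exists (flat_map (fun a => proj1_sig (constructive_indefinite_description _ (h a))) (enum A)).
move=> z [a hz]. apply in_flat_map. exists a; split; first exact: In_enum.
exact: (proj2_sig (constructive_indefinite_description _ (h a))).
Qed.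

Lemma finite_U2 T (A B : T -> Prop) :
  finite_set A -> finite_set B -> finite_set (fun z => A z \/ B z).
Proof.
move=> [l1 h1] [l2 h2]; exists (l1 ++ l2) => z [/h1|/h2] h; apply in_or_app; auto.
Qed.

Lemma claim (n : nat) (X : 'I_n -> Type) (F : Omega X -> Prop) (k : nat)
  (R : 'I_k -> (Omega X -> Prop)) (c : 'I_k -> Omega X) (i0 : 'I_n)
  (hF : full F) (hRc : forall j, R j = fun y => F y /\ related F (c j) y)
  (hFc : forall j, F (c j)) (hcov : forall x, F x -> exists j, R j x) :
  forall j l y, R l y -> related F (c j) y.
Proof.
move=> j l y hy.
have hRj : forall j', R j' (c j').
  by move=> j'; rewrite hRc; split; [exact: hFc | exact: related_refl].
pose overlap i j1 j2 := exists x1 x2, R j1 x1 /\ R j2 x2 /\ x1 i = x2 i.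
pose PS i j1 j2 (S : Omega X -> Prop) := subset_of S F /\ finite_set S /\
  (forall z, S z -> exists j' T, subset_of T S /\ full T /\ T (c j') /\ T z) /\
  (overlap i j1 j2 -> exists x1 x2 T1 T2, x1 i = x2 i /\ subset_of T1 S /\
     subset_of T2 S /\ full T1 /\ full T2 /\ T1 (c j1) /\ T1 x1 /\ T2 (c j2) /\ T2 x2).
have hex : forall i j1 j2, exists S, PS i j1 j2 S.
  move=> i j1 j2.
  case: (classic (overlap i j1 j2)) => [[x1 [x2 [h1 [h2 he]]]] | hn].
  - move: (h1) (h2); rewrite !hRc => -[_ [T1 [s1 [fin1 [full1 [a1 b1]]]]]]
      [_ [T2 [s2 [fin2 [full2 [a2 b2]]]]]].
    exists (fun z => T1 z \/ T2 z); split; first by move=> z [/s1|/s2].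
    split; first exact: finite_U2.
    split.
      move=> z [hz|hz].
        by exists j1, T1; split; first by move=> t ht; left.
      by exists j2, T2; split; first by move=> t ht; right.
    move=> _; exists x1, x2, T1, T2; split; first done.
    split; first by move=> t ht; left.
    split; first by move=> t ht; right.
    done.
  - exists (fun _ => False); split; first done.
    split; first by exists nil.
    split; first done.
    by move=> /hn.
pose Sf i j1 j2 := proj1_sig (constructive_indefinite_description _ (hex i j1 j2)).
have hSf : forall i j1 j2, PS i j1 j2 (Sf i j1 j2).
  by move=> i j1 j2; exact: (proj2_sig (constructive_indefinite_description _ (hex i j1 j2))).
move: (hy); rewrite hRc => -[Fy [Ty [sTy [finTy [fullTy [aTy bTy]]]]]].
pose U z := Ty z \/ exists i j1 j2, Sf i j1 j2 z.
have finU : finite_set U.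
  apply: finite_U2 => //.
  apply: finite_bigU => i; apply: finite_bigU => j1; apply: finite_bigU => j2.
  by have [_ [? _]] := hSf i j1 j2.
have UF : subset_of U F.
  move=> z [/sTy //|[i [j1 [j2 hz]]]].
  by have [h _] := hSf i j1 j2; apply: h.
have covU : forall z, U z -> exists j' T, subset_of T U /\ full T /\ T (c j') /\ T z.
  move=> z [hz|[i [j1 [j2 hz]]]].
    by exists l, Ty; split; first by move=> t ht; left.
  have [_ [_ [h _]]] := hSf i j1 j2.
  have [j' [T [sT rest]]] := h z hz.
  exists j', T; split => //.
  by move=> t /sT ht; right; exists i, j1, j2.
have cst : forall w, ker U w -> forall T j' z i, subset_of T U -> full T ->
    T (c j') -> T z -> w i (z i) = w i (c j' i).
  move=> w hw T j' z i sT fT hc hz; apply: (@full_const _ _ T w (c j') z i fT) => //.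
  by move=> t /sT; apply: hw.
have ovw : forall w, ker U w -> forall i j1 j2, overlap i j1 j2 ->
    w i (c j1 i) = w i (c j2 i).
  move=> w hw i j1 j2 ho.
  have [_ [_ [_ h]]] := hSf i j1 j2.
  have [x1 [x2 [T1 [T2 [he [s1 [s2 [f1 [f2 [a1 [b1 [a2 b2]]]]]]]]]]]] := h ho.
  have sub : forall T, subset_of T (Sf i j1 j2) -> subset_of T U.
    by move=> T sT t /sT ht; right; exists i, j1, j2.
  rewrite -(cst w hw T1 j1 x1 i (sub _ s1) f1 a1 b1) he.
  exact: (cst w hw T2 j2 x2 i (sub _ s2) f2 a2 b2).
have cU : forall j', U (c j').
  move=> j'.
  have [_ [_ [_ h]]] := hSf i0 j' j'.
  have [x1 [x2 [T1 [T2 [he [s1 [s2 [f1 [f2 [a1 [b1 [a2 b2]]]]]]]]]]]] :=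
    h (ex_intro _ (c j') (ex_intro _ (c j') (conj (hRj j') (conj (hRj j') erefl)))).
  by right; exists i0, j', j'; apply: s1.
have ceq : forall w, ker U w -> forall i j1 j2, w i (c j1 i) = w i (c j2 i).
  move=> w hw i j1 j2.
  pose J i a := epsilon (inhabits j) (fun j' => exists x, R j' x /\ x i = a).
  pose w' i a := w i (c (J i a) i).
  have hJ : forall i j' x, R j' x -> overlap i (J i (x i)) j'.
    move=> i' j' x hx.
    have [x' [hx' he]] := epsilon_spec (inhabits j)
      (fun j'' => exists x', R j'' x' /\ x' i' = x i') (ex_intro _ j' (ex_intro _ x (conj hx erefl))).
    by exists x', x.
  have hw'c : forall i j', w' i (c j' i) = w i (c j' i).
    by move=> i' j'; exact: (ovw w hw i' _ j' (hJ i' j' (c j') (hRj j'))).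
  have kerF : ker F w'.
    move=> x hx; have [m hm] := hcov x hx.
    transitivity (dlt (c m) w); last exact: hw (cU m).
    apply: eq_bigr => i' _; rewrite /w'.
    exact: (ovw w hw i' _ m (hJ i' m x hm)).
  have := full_ker hF kerF (box_repl i (hFc j1) (hFc j2)).
  rewrite dlt_repl (kerF _ (hFc j1)) add0r => /eqP; rewrite subr_eq0 => /eqP.
  by rewrite !hw'c => ->.
have key : forall w, ker U w -> forall p, box U p -> dlt p w = 0.
  move=> w hw p hp.
  rewrite -(hw _ (cU j)); apply: eq_bigr => i _.
  have [z [hz <-]] := hp i.
  have [j' [T [sT [fT [hc hzT]]]]] := covU z hz.
  rewrite (cst w hw T j' z i sT fT hc hzT).
  exact: ceq.
pose T0 := fun z => z = c j \/ z = y.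
have gT0 : good T0.
  case: (classic (c j = y)) => [eq | neq].
    apply: (good_sub (good_single i0 (c j))).
    by move=> z [->|->].
  have [i1 hi1] : exists i1, c j i1 <> y i1.
    apply: NNPP => hn; apply: neq; apply: functional_extensionality_dep => i.
    by apply: NNPP => hne; apply: hn; exists i.
  pose w i (a : X i) : CC := if i == i1 then
      (if excluded_middle_informative (a = c j i) then 0 else 1) else 0.
  apply: (good_ext (w := w)).
  - exact: good_single i0 (c j).
  - move=> z ->; apply: big1 => i _; rewrite /w; case: (i == i1) => //.
    by destruct (excluded_middle_informative _).
  - rewrite /dlt (bigD1 i1) //= big1 ?addr0.
      rewrite /w eqxx; destruct (excluded_middle_informative _) as [e|ne].
        by exfalso; apply: hi1.
      exact: oner_neq0.
    by move=> i /negbTE hi; rewrite /w hi.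
have sT0U : subset_of T0 U by move=> z [->|->]; [exact: cU | left].
have [lU hlU] := finU.
have [T [gT [h0T [sTU [hsT hkT]]]]] := greedy lU gT0 sT0U.
have kerTU : forall w, ker T w -> ker U w.
  by move=> w hw q hq; apply: hkT => //; apply: hlU.
have fullT : full T.
  split; first done.
  split; first by move=> z hz i; exists z.
  move=> T' gT' sTT' sT'b z hz; apply: NNPP => hnz.
  pose f := fun x : Omega X => if excluded_middle_informative (x = z) then (1 : CC) else 0.
  have [u hu] := gT' f.
  have ku : ker T u.
    move=> x hx; rewrite /dlt -hu; last exact: sTT'.
    rewrite /f; destruct (excluded_middle_informative (x = z)) as [e|ne] => //.
    by exfalso; apply: hnz; rewrite -e.
  have bz : box U z.
    move=> i; have [x [hx e]] := sT'b z hz i.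
    by exists x; split => //; apply: sTU.
  have := key u (kerTU u ku) z bz.
  rewrite /dlt -hu // /f; destruct (excluded_middle_informative (z = z)) as [e|ne] => //.
  by move/eqP; rewrite oner_eq0.
exists T; split; first by move=> z /sTU /UF.
split.
  exists (c j :: y :: lU) => z /hsT [[->|->]|hz]; simpl; auto.
split; first done.
by split; apply: h0T; [left|right].
Qed.

Theorem theorem1 (n : nat) (X : 'I_n -> Type)
  (hX : forall i : 'I_n, inhabited (X i))
  (F : Omega X -> Prop) (hF : full F) (hFne : exists x, F x)
  (k : nat) (R : 'I_k -> (Omega X -> Prop))
  (hR : forall j, related_component F (R j))
  (hdist : forall j1 j2, R j1 = R j2 -> j1 = j2)
  (hcov : forall x, F x -> exists j, R j x) :
  k = 1.
Proof.
have [x0 Fx0] := hFne.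
have hn : (0 < n)%N.
  case: (posnP n) => // h0; exfalso.
  have [u hu] := hF.1 (fun _ => 1).
  have := hu x0 Fx0; rewrite big1; last by move=> i; have := ltn_ord i; rewrite {2}h0.
  by move/eqP; rewrite oner_eq0.
pose i0 := Ordinal hn.
pose c j := proj1_sig (constructive_indefinite_description _ (hR j)).
have hc : forall j, F (c j) /\ R j = (fun y => F y /\ related F (c j) y).
  by move=> j; exact: (proj2_sig (constructive_indefinite_description _ (hR j))).
have cl := @claim n X F k R c i0 hF (fun j => (hc j).2) (fun j => (hc j).1) hcov.
move: k R hR hdist hcov c hc cl => [|[|k]] R hR hdist hcov c hc cl //.
  by have [[j hj] _] := hcov x0 Fx0.
have e : R ord0 = R (@Ordinal k.+2 1 erefl).
  apply: functional_extensionality => y; apply: propositional_extensionality.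
  split => h.
  - rewrite (hc _).2; split; last exact: cl h.
    by move: h; rewrite (hc _).2 => -[].
  - rewrite (hc _).2; split; last exact: cl h.
    by move: h; rewrite (hc _).2 => -[].
by have := hdist _ _ e => /(congr1 val).
Qed.
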